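(* For every $n\ge1$ and every choice of coefficients there exist a real polynomial $P$ of degree at most $2n+1$ and a real polynomial $Q$ of degree at most $[\frac{n-1}{2}]$ such that for all $u\in(0,+\infty)$, $$M(u^4+u^2)=u\,P(u)+(u^4+u^2)\,Q(u^4+u^2)\int_0^{1/\sqrt{1+u^2}}\sqrt{1-t^2}\,dt.$$
   Context: Fix an integer $n\ge 1$ and real coefficients $a^k_{i,j},b^k_{i,j}$ ($k=1,2,3,4$; $i+j\le n$), $f_k=\sum_{0\le i+j\le n}a^k_{i,j}x^iy^j$, $g_k=\sum_{0\le i+j\le n}b^k_{i,j}x^iy^j$. For $h>0$ let $u(h)=\sqrt{(\sqrt{1+4h}-1)/2}$ (the unique positive number with $u^4+u^2=h$), $\Gamma_h$ the circle $x^2+y^2=h$, and $A=(u,u^2)$, $B=(u,-u^2)$, $C=(-u,-u^2)$, $D=(-u,u^2)$. Let $\widehat{AB},\widehat{BC},\widehat{CD},\widehat{DA}$ be the arcs of $\Gamma_h$ traversed clockwise from $A$ to $B$ (through $(\sqrt h,0)$), $B$ to $C$ (through $(0,-\sqrt h)$), $C$ to $D$ (through $(-\sqrt h,0)$), $D$ to $A$ (through $(0,\sqrt h)$). Define $$M(h)=\int_{\widehat{AB}}g_1dx-f_1dy+\int_{\widehat{BC}}g_2dx-f_2dy+\int_{\widehat{CD}}g_3dx-f_3dy+\int_{\widehat{DA}}g_4dx-f_4dy,\quad h>0.$$ $[p]$ is the integer part of $p$. *)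

(* Defs.v *)
From Stdlib Require Import Reals Lra ClassicalEpsilon.
Open Scope R_scope.

(* Oriented Riemann integral int_a^b f (a > b allowed, as in Stdlib's RiemannInt);
   defined as the value of RiemannInt whenever f is Riemann integrable
   (RiemannInt does not depend on the integrability proof). *)
Definition RInt (f : R -> R) (a b : R) : R :=
  epsilon (inhabits 0) (fun I => exists pr : Riemann_integrable f a b, RiemannInt pr = I).

Definition poly2 (c : nat -> nat -> R) (n : nat) (x y : R) : R :=
  sum_f_R0 (fun i => sum_f_R0 (fun j => c i j * x ^ i * y ^ j) (n - i)) n.

Definition poly1 (p : nat -> R) (d : nat) (t : R) : R :=
  sum_f_R0 (fun k => p k * t ^ k) d.

(* u(h): the unique positive number with u^4 + u^2 = h *)
Definition uh (h : R) : R := sqrt ((sqrt (1 + 4 * h) - 1) / 2).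

(* Line integral of  g dx - f dy  along the circle x^2+y^2=h parametrized by
   theta |-> (sqrt h cos theta, sqrt h sin theta), from angle th0 to angle th1. *)
Definition circ_int (f g : R -> R -> R) (h th0 th1 : R) : R :=
  RInt (fun th =>
          g (sqrt h * cos th) (sqrt h * sin th) * (- sqrt h * sin th)
        - f (sqrt h * cos th) (sqrt h * sin th) * (sqrt h * cos th)) th0 th1.

(* a k i j = a^k_{i,j}, b k i j = b^k_{i,j}, k = 1..4.
   A=(u,u^2) is at angle al = atan u; B at -al; C at al - PI (== -PI - ... ); D at PI - al.
   Clockwise = decreasing angle:
   AB : al -> -al          (through angle 0)
   BC : -al -> al - PI     (through -PI/2)
   CD : al - PI -> -PI - al (through -PI), ending at D (angle -PI-al == PI-al mod 2PI)
   DA : PI - al -> al      (through PI/2) *)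
Definition Mfun (n : nat) (a b : nat -> nat -> nat -> R) (h : R) : R :=
  let al := atan (uh h) in
  let f k := poly2 (a k) n in
  let g k := poly2 (b k) n in
  circ_int (f 1%nat) (g 1%nat) h al (- al)
  + circ_int (f 2%nat) (g 2%nat) h (- al) (al - PI)
  + circ_int (f 3%nat) (g 3%nat) h (al - PI) (- PI - al)
  + circ_int (f 4%nat) (g 4%nat) h (PI - al) al.

(* Main.v *)
Require Import Defs.
From Stdlib Require Import Reals Lra Lia ClassicalEpsilon.
From Coquelicot Require Import Coquelicot.
Open Scope R_scope.

Definition IsPoly (N : nat) (P : R -> R) : Prop := exists p, forall t, P t = poly1 p N t.

Lemma IsPoly_ext N P Q : (forall t, P t = Q t) -> IsPoly N P -> IsPoly N Q.
Proof. intros H [p Hp]; exists p; intros t; rewrite <- H; auto. Qed.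

Lemma sum_zero (N : nat) (f : nat -> R) : (forall k, f k = 0) -> sum_f_R0 f N = 0.
Proof. intros H; induction N; simpl; rewrite ?IHN, H; ring. Qed.

Lemma IsPoly_0 N : IsPoly N (fun _ => 0).
Proof. exists (fun _ => 0); intros t; unfold poly1; rewrite sum_zero; auto; intros; ring. Qed.

Lemma IsPoly_const c : IsPoly 0 (fun _ => c).
Proof. exists (fun _ => c); intros t; unfold poly1; simpl; ring. Qed.

Lemma IsPoly_add N P Q : IsPoly N P -> IsPoly N Q -> IsPoly N (fun t => P t + Q t).
Proof.
  intros [p Hp] [q Hq]; exists (fun k => p k + q k); intros t; rewrite Hp, Hq.
  unfold poly1; rewrite <- plus_sum; apply sum_eq; intros; ring.
Qed.

Lemma IsPoly_scal N c P : IsPoly N P -> IsPoly N (fun t => c * P t).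
Proof.
  intros [p Hp]; exists (fun k => c * p k); intros t; rewrite Hp.
  unfold poly1; rewrite scal_sum; apply sum_eq; intros; ring.
Qed.

Lemma IsPoly_S N P : IsPoly N P -> IsPoly (S N) P.
Proof.
  intros [p Hp]; exists (fun k => if Nat.eqb k (S N) then 0 else p k); intros t; rewrite Hp.
  unfold poly1; rewrite tech5, Nat.eqb_refl.
  rewrite Rmult_0_l, Rplus_0_r. apply sum_eq; intros i Hi; simpl.
  destruct (Nat.eqb_spec i (S N)) as [e|e]; [exfalso; lia | reflexivity].
Qed.

Lemma IsPoly_weak N M P : (N <= M)%nat -> IsPoly N P -> IsPoly M P.
Proof. intros H; induction H; auto; intros; apply IsPoly_S; auto. Qed.

Lemma IsPoly_shift N P : IsPoly N P -> IsPoly (S N) (fun t => t * P t).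
Proof.
  intros [p Hp]; exists (fun k => match k with O => 0 | S k' => p k' end); intros t; rewrite Hp.
  unfold poly1. rewrite (decomp_sum _ (S N)) by lia. simpl pred.
  rewrite scal_sum. simpl. rewrite Rmult_0_l, Rplus_0_l. apply sum_eq; intros; simpl; ring.
Qed.

Lemma IsPoly_mulpow k N P : IsPoly N P -> IsPoly (k + N) (fun t => t ^ k * P t).
Proof.
  induction k; intros H; simpl.
  - eapply IsPoly_ext; [|exact H]; intros; ring.
  - eapply IsPoly_ext; [|apply IsPoly_shift, IHk, H]; intros; simpl; ring.
Qed.

Lemma IsPoly_mono c k N : (k <= N)%nat -> IsPoly N (fun t => c * t ^ k).
Proof.
  intros H; apply IsPoly_weak with (N := k); auto.
  replace k with (k + 0)%nat at 1 by lia.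
  eapply IsPoly_ext; [|apply IsPoly_mulpow, (IsPoly_const c)]; intros; simpl; ring.
Qed.

Definition HPoly (D : nat) (g : R -> R) : Prop :=
  match D with
  | O => forall t, g t = 0
  | S D' => exists Q, IsPoly D' Q /\ forall t, g t = t * Q t
  end.

Lemma HPoly_ext D g h : (forall t, g t = h t) -> HPoly D g -> HPoly D h.
Proof.
  destruct D; simpl; intros E H.
  - intros t; rewrite <- E; auto.
  - destruct H as [Q [HQ H]]; exists Q; split; auto; intros t; rewrite <- E; auto.
Qed.

Lemma HPoly_0 D : HPoly D (fun _ => 0).
Proof. destruct D; simpl; auto. exists (fun _ => 0); split; [apply IsPoly_0|intros; ring]. Qed.

Lemma HPoly_add D g h : HPoly D g -> HPoly D h -> HPoly D (fun t => g t + h t).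
Proof.
  destruct D; simpl.
  - intros A B t; rewrite A, B; ring.
  - intros [Q [HQ A]] [Q' [HQ' B]]; exists (fun t => Q t + Q' t); split.
    + apply IsPoly_add; auto.
    + intros t; rewrite A, B; ring.
Qed.

Lemma HPoly_scal D c g : HPoly D g -> HPoly D (fun t => c * g t).
Proof.
  destruct D; simpl.
  - intros A t; rewrite A; ring.
  - intros [Q [HQ A]]; exists (fun t => c * Q t); split.
    + apply IsPoly_scal; auto.
    + intros t; rewrite A; ring.
Qed.

Lemma HPoly_S D g : HPoly D g -> HPoly (S D) g.
Proof.
  destruct D; simpl.
  - intros A; exists (fun _ => 0); split; [apply IsPoly_0|]; intros t; rewrite A; ring.
  - intros [Q [HQ A]]; exists Q; split; auto; apply IsPoly_S; auto.
Qed.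

Lemma HPoly_weak D D' g : (D <= D')%nat -> HPoly D g -> HPoly D' g.
Proof. intros H; induction H; auto; intros; apply HPoly_S; auto. Qed.

Lemma HPoly_mulx D g : HPoly D g -> HPoly (S D) (fun t => t * g t).
Proof.
  destruct D; simpl.
  - intros A; exists (fun _ => 0); split; [apply IsPoly_0|]; intros t; rewrite A; ring.
  - intros [Q [HQ A]]; exists (fun t => t * Q t); split.
    + apply IsPoly_shift; auto.
    + intros t; rewrite A; ring.
Qed.

Definition J (u : R) : R := (PI / 2 - atan u) / 2 + u / (2 * (1 + u ^ 2)).

Definition good (N D : nat) (F : R -> R) : Prop :=
  exists P G, IsPoly N P /\ HPoly D G /\
    forall u, 0 < u -> F u = u * P u + G (u ^ 4 + u ^ 2) * J u.

Lemma good_ext N D F F' : (forall u, 0 < u -> F u = F' u) -> good N D F -> good N D F'.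
Proof.
  intros E [P [G [HP [HG H]]]]; exists P, G; repeat split; auto.
  intros u Hu; rewrite <- E; auto.
Qed.

Lemma good_add N D F F' : good N D F -> good N D F' -> good N D (fun u => F u + F' u).
Proof.
  intros [P [G [HP [HG H]]]] [P' [G' [HP' [HG' H']]]].
  exists (fun t => P t + P' t), (fun t => G t + G' t); repeat split.
  - apply IsPoly_add; auto.
  - apply HPoly_add; auto.
  - intros u Hu; rewrite H, H'; auto; ring.
Qed.

Lemma good_scal N D c F : good N D F -> good N D (fun u => c * F u).
Proof.
  intros [P [G [HP [HG H]]]].
  exists (fun t => c * P t), (fun t => c * G t); repeat split.
  - apply IsPoly_scal; auto.
  - apply HPoly_scal; auto.
  - intros u Hu; rewrite H; auto; ring.
Qed.

Lemma good_weak N D N' D' F : (N <= N')%nat -> (D <= D')%nat -> good N D F -> good N' D' F.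
Proof.
  intros h1 h2 [P [G [HP [HG H]]]]; exists P, G; repeat split; auto.
  - eapply IsPoly_weak; eauto.
  - eapply HPoly_weak; eauto.
Qed.

Lemma good_mulh N D F : good N D F -> good (N + 4) (S D) (fun u => (u ^ 4 + u ^ 2) * F u).
Proof.
  intros [P [G [HP [HG H]]]].
  exists (fun t => t ^ 4 * P t + t ^ 2 * P t), (fun t => t * G t); repeat split.
  - apply IsPoly_add.
    + replace (N + 4)%nat with (4 + N)%nat by lia; apply IsPoly_mulpow; auto.
    + apply IsPoly_weak with (2 + N)%nat; [lia|]; apply IsPoly_mulpow; auto.
  - apply HPoly_mulx; auto.
  - intros u Hu; rewrite H; auto; ring.
Qed.

Lemma good_mono N D c k : (1 <= k)%nat -> (k <= S N)%nat -> good N D (fun u => c * u ^ k).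
Proof.
  intros h1 h2; exists (fun t => c * t ^ (k - 1)), (fun _ => 0); repeat split.
  - apply IsPoly_mono; lia.
  - apply HPoly_0.
  - intros u _. replace k with (S (k - 1)) at 1 by lia. simpl; ring.
Qed.

Lemma INR_match (p : nat) : (match p with 0%nat => 1 | S _ => INR p + 1 end) = INR p + 1.
Proof. destruct p; [simpl; ring | reflexivity]. Qed.

Lemma D1 p q x : is_derive (fun x => cos x ^ S p * sin x ^ S q) x
  (- (INR p + 1) * (cos x ^ p * sin x ^ S (S q)) + (INR q + 1) * (cos x ^ S (S p) * sin x ^ q)).
Proof. auto_derive; auto. rewrite !INR_match. simpl. ring. Qed.

Lemma D2 p x : is_derive (fun x => cos x ^ S p * sin x ^ 0) x
  (- (INR p + 1) * (cos x ^ p * sin x ^ 1)).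
Proof. auto_derive; auto. rewrite !INR_match. simpl. ring. Qed.

Lemma D3 x : is_derive (fun x => cos x ^ 0 * sin x ^ 1) x (cos x ^ 1 * sin x ^ 0).
Proof. auto_derive; auto. simpl. ring. Qed.

Lemma D4 x : is_derive (fun x => x) x (cos x ^ 0 * sin x ^ 0).
Proof. auto_derive; auto. simpl. ring. Qed.

Definition r (u : R) : R := sqrt (u ^ 4 + u ^ 2).

Lemma r2 u : r u ^ 2 = u ^ 4 + u ^ 2.
Proof.
  unfold r. replace (sqrt (u ^ 4 + u ^ 2) ^ 2) with (sqrt (u ^ 4 + u ^ 2) * sqrt (u ^ 4 + u ^ 2)) by ring. apply sqrt_sqrt.
  assert (0 <= u ^ 2) by (apply pow2_ge_0). assert (0 <= u^4) by (replace (u^4) with ((u^2)^2) by ring; apply pow2_ge_0). lra.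
Qed.

Definition EP (phi : R -> R) : Prop :=
  exists s t, forall u, 0 < u -> r u * cos (phi u) = s * u /\ r u * sin (phi u) = t * u ^ 2.

Definition Arc (phi0 phi1 : R -> R) : Prop :=
  EP phi0 /\ EP phi1 /\ good 3 1 (fun u => (u ^ 4 + u ^ 2) * (phi1 u - phi0 u)).

Lemma EP_pow phi a b : EP phi -> exists k, forall u, 0 < u ->
  r u ^ (a + b) * (cos (phi u) ^ a * sin (phi u) ^ b) = k * u ^ (a + 2 * b).
Proof.
  intros [s [t H]]. exists (s ^ a * t ^ b). intros u Hu.
  destruct (H u Hu) as [H1 H2].
  rewrite pow_add.
  replace (r u ^ a * r u ^ b * (cos (phi u) ^ a * sin (phi u) ^ b))
    with ((r u * cos (phi u)) ^ a * (r u * sin (phi u)) ^ b)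
    by (rewrite !Rpow_mult_distr; ring).
  rewrite H1, H2, !Rpow_mult_distr, pow_add, pow_mult. ring.
Qed.

Lemma bnd phi0 phi1 N D a b : Arc phi0 phi1 -> (1 <= a + b)%nat -> (a + 2 * b <= S N)%nat ->
  good N D (fun u => r u ^ (a + b) *
    (cos (phi1 u) ^ a * sin (phi1 u) ^ b - cos (phi0 u) ^ a * sin (phi0 u) ^ b)).
Proof.
  intros [E0 [E1 _]] h1 h2.
  destruct (EP_pow _ a b E0) as [k0 H0]. destruct (EP_pow _ a b E1) as [k1 H1].
  apply good_ext with (fun u => k1 * u ^ (a + 2 * b) + (- k0) * u ^ (a + 2 * b)).
  - intros u Hu. replace (k1 * u ^ (a + 2 * b) + - k0 * u ^ (a + 2 * b)) with (k1 * u ^ (a + 2 * b) - k0 * u ^ (a + 2 * b)) by ring. rewrite <- (H0 u Hu), <- (H1 u Hu). ring.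
  - apply good_add; apply good_mono; lia.
Qed.

Lemma der_eq (f : R -> R) (x l l' : R) : is_derive f x l -> l = l' -> is_derive f x l'.
Proof. intros H E; subst; auto. Qed.

Lemma lin_der (F G : R -> R) f g a b x : is_derive F x f -> is_derive G x g ->
  is_derive (fun x => a * F x + b * G x) x (a * f + b * g).
Proof.
  intros HF HG. apply (is_derive_plus (fun x => a * F x) (fun x => b * G x)).
  - apply (is_derive_scal F x a f HF).
  - apply (is_derive_scal G x b g HG).
Qed.

Lemma INR_p1 p : INR p + 1 <> 0.
Proof. pose proof (pos_INR p); lra. Qed.

Definition Claim phi0 phi1 d : Prop := forall p q, (p + q = d)%nat ->
  exists A : R -> R, (forall x, is_derive A x (cos x ^ p * sin x ^ q)) /\
    good (2 * d - 1) (d / 2) (fun u => r u ^ d * (A (phi1 u) - A (phi0 u))).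

Lemma claim_all phi0 phi1 : Arc phi0 phi1 -> forall d, (1 <= d)%nat -> Claim phi0 phi1 d.
Proof.
  intros Harc d. induction d as [d IHd] using Wf_nat.lt_wf_ind. intros Hd p q.
  revert p. induction q as [q IHq] using Wf_nat.lt_wf_ind. intros p Hpq.
  destruct q as [|[|q']].
  -
    rewrite Nat.add_0_r in Hpq. subst p.
    destruct d as [|[|m]]; [lia| |].
    + exists (fun x => cos x ^ 0 * sin x ^ 1). split.
      * intros x; apply D3.
      * apply good_ext with (fun u => r u ^ (0 + 1) *
          (cos (phi1 u) ^ 0 * sin (phi1 u) ^ 1 - cos (phi0 u) ^ 0 * sin (phi0 u) ^ 1)).
        { intros; reflexivity. }
        apply bnd; auto; lia.
    + assert (Hm : exists A2 : R -> R, (forall x, is_derive A2 x (cos x ^ m * sin x ^ 0)) /\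
        good (2 * S (S m) - 1) (S (S m) / 2)
          (fun u => (u ^ 4 + u ^ 2) * (r u ^ m * (A2 (phi1 u) - A2 (phi0 u))))).
      { destruct m as [|m'].
        - exists (fun x => x). split; [intros; apply D4|].
          destruct Harc as [_ [_ G]].
          eapply good_ext; [|exact G]. intros u _; simpl; ring.
        - destruct (IHd (S m') ltac:(lia) ltac:(lia) (S m') 0%nat ltac:(lia)) as [A2 [HA2 G2]].
          exists A2; split; auto.
          apply good_weak with (2 * S m' - 1 + 4)%nat (S (S m' / 2)); [lia| |].
          + replace (S (S (S m')) / 2)%nat with (S (S m' / 2)).
            * lia.
            * replace (S (S (S m'))) with (S m' + 1 * 2)%nat by lia.
              rewrite Nat.div_add by lia. lia.
          + apply good_mulh; auto. }
      destruct Hm as [A2 [HA2 G2]].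
      set (a := (INR m + 1) / (INR m + 2)). set (b := 1 / (INR m + 2)).
      assert (Hm2 : INR m + 2 <> 0) by (pose proof (pos_INR m); lra).
      exists (fun x => a * A2 x + b * (cos x ^ S m * sin x ^ 1)). split.
      * intros x. eapply der_eq; [apply lin_der; [apply HA2 | apply (D1 m 0)]|].
        unfold a, b. pose proof (sin2_cos2 x) as E. unfold Rsqr in E.
        simpl. replace (sin x * (sin x * 1)) with (1 - cos x * cos x) by lra. field; auto.
      * apply good_ext with (fun u => a * ((u ^ 4 + u ^ 2) * (r u ^ m * (A2 (phi1 u) - A2 (phi0 u))))
            + b * (r u ^ (S m + 1) * (cos (phi1 u) ^ S m * sin (phi1 u) ^ 1
                   - cos (phi0 u) ^ S m * sin (phi0 u) ^ 1))).
        { intros u _. rewrite <- r2. replace (S m + 1)%nat with (S (S m)) by lia.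
          simpl; ring. }
        apply good_add; apply good_scal; auto.
        apply bnd; auto; lia.
  -
    set (b := -1 / (INR p + 1)).
    exists (fun x => b * (cos x ^ S p * sin x ^ 0)). split.
    + intros x. eapply der_eq; [apply (is_derive_scal (fun x => cos x ^ S p * sin x ^ 0)), D2|].
      unfold b. simpl. field. apply INR_p1.
    + apply good_ext with (fun u => b * (r u ^ (S p + 0) * (cos (phi1 u) ^ S p * sin (phi1 u) ^ 0
                   - cos (phi0 u) ^ S p * sin (phi0 u) ^ 0))).
      { intros u _. replace (S p + 0)%nat with d by lia. ring. }
      apply good_scal. apply bnd; auto; lia.
  -
    destruct (IHq q' ltac:(lia) (S (S p)) ltac:(lia)) as [A1 [HA1 G1]].
    set (a := (INR q' + 1) / (INR p + 1)). set (b := -1 / (INR p + 1)).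
    exists (fun x => a * A1 x + b * (cos x ^ S p * sin x ^ S q')). split.
    + intros x. eapply der_eq; [apply lin_der; [apply HA1 | apply (D1 p q')]|].
      unfold a, b. field. apply INR_p1.
    + apply good_ext with (fun u => a * (r u ^ d * (A1 (phi1 u) - A1 (phi0 u)))
            + b * (r u ^ (S p + S q') * (cos (phi1 u) ^ S p * sin (phi1 u) ^ S q'
                   - cos (phi0 u) ^ S p * sin (phi0 u) ^ S q'))).
      { intros u _. replace (S p + S q')%nat with d by lia. ring. }
      apply good_add; apply good_scal; auto.
      apply bnd; auto; lia.
Qed.

Lemma RInt_ftc (f A : R -> R) a b :
  (forall x, Rmin a b <= x <= Rmax a b -> is_derive A x (f x)) ->
  (forall x, Rmin a b <= x <= Rmax a b -> continuous f x) ->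
  Defs.RInt f a b = A b - A a.
Proof.
  intros HD HC.
  assert (H : is_RInt f a b (minus (A b) (A a))) by (apply (is_RInt_derive A f); auto).
  assert (pr : Riemann_integrable f a b) by (apply ex_RInt_Reals_0; eexists; eauto).
  unfold Defs.RInt.
  destruct (epsilon_spec (inhabits 0) (fun I => exists pr : Riemann_integrable f a b, RiemannInt pr = I))
    as [pr' E].
  - exists (RiemannInt pr); exists pr; auto.
  - rewrite <- E.
    pose proof (ex_RInt_Reals_aux_1 f a b pr') as H'.
    pose proof (@is_RInt_unique R_CompleteNormedModule f a b _ H') as E1.
    pose proof (@is_RInt_unique R_CompleteNormedModule f a b _ H) as E2. rewrite <- E1, E2. reflexivity.
Qed.

Definition GA (n : nat) (phi0 phi1 : R -> R) (Phi : R -> R -> R) : Prop :=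
  exists A : R -> R -> R, (forall u x, is_derive (A u) x (Phi u x)) /\
    (forall u x, continuous (Phi u) x) /\
    good (2 * n + 1) ((n + 1) / 2) (fun u => A u (phi1 u) - A u (phi0 u)).

Lemma GA_ext n phi0 phi1 Phi Psi : (forall u x, Phi u x = Psi u x) ->
  GA n phi0 phi1 Phi -> GA n phi0 phi1 Psi.
Proof.
  intros E [A [HD [HC G]]]. exists A; split; [|split]; auto.
  - intros u x; rewrite <- E; auto.
  - intros u x. apply (continuous_ext (Phi u)); auto.
Qed.

Lemma GA_add n phi0 phi1 Phi Psi : GA n phi0 phi1 Phi -> GA n phi0 phi1 Psi ->
  GA n phi0 phi1 (fun u x => Phi u x + Psi u x).
Proof.
  intros [A [HD [HC G]]] [B [HD' [HC' G']]].
  exists (fun u x => A u x + B u x); split; [|split].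
  - intros u x. apply (is_derive_plus (A u) (B u)); auto.
  - intros u x. apply (continuous_plus (Phi u) (Psi u)); auto.
  - apply good_ext with (fun u => (A u (phi1 u) - A u (phi0 u)) + (B u (phi1 u) - B u (phi0 u))); [intros; ring | apply good_add; auto].
Qed.

Lemma GA_scal n phi0 phi1 c Phi : GA n phi0 phi1 Phi ->
  GA n phi0 phi1 (fun u x => c * Phi u x).
Proof.
  intros [A [HD [HC G]]].
  exists (fun u x => c * A u x); split; [|split].
  - intros u x. apply (is_derive_scal (A u)); auto.
  - intros u x. apply (continuous_scal_r c (Phi u)); auto.
  - apply good_ext with (fun u => c * (A u (phi1 u) - A u (phi0 u))); [intros; ring | apply good_scal; auto].
Qed.

Lemma GA_sum n phi0 phi1 (F : nat -> R -> R -> R) m :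
  (forall i, (i <= m)%nat -> GA n phi0 phi1 (F i)) ->
  GA n phi0 phi1 (fun u x => sum_f_R0 (fun i => F i u x) m).
Proof.
  induction m; intros H.
  - simpl; apply H; lia.
  - simpl. apply GA_add; auto.
Qed.

Lemma cs_cont p q x : continuous (fun x => cos x ^ p * sin x ^ q) x.
Proof. apply (@ex_derive_continuous R_AbsRing R_NormedModule). auto_derive; auto. Qed.

Lemma GA_base n phi0 phi1 k p q d : Arc phi0 phi1 -> (p + q = d)%nat -> (1 <= d)%nat ->
  (d <= n + 1)%nat ->
  GA n phi0 phi1 (fun u x => k * (r u ^ d * (cos x ^ p * sin x ^ q))).
Proof.
  intros Harc Hpq h1 h2.
  destruct (claim_all _ _ Harc d h1 p q Hpq) as [A [HD G]].
  exists (fun u x => k * (r u ^ d * A x)). split; [|split].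
  - intros u x. apply (is_derive_scal (fun x => r u ^ d * A x)).
    apply (is_derive_scal A); auto.
  - intros u x. apply (continuous_scal_r k (fun x => r u ^ d * (cos x ^ p * sin x ^ q))).
    apply (continuous_scal_r (r u ^ d) (fun x => cos x ^ p * sin x ^ q)). apply cs_cont.
  - apply good_weak with (2 * d - 1)%nat (d / 2)%nat.
    + lia.
    + apply Nat.div_le_mono; lia.
    + apply good_ext with (fun u => k * (r u ^ d * (A (phi1 u) - A (phi0 u)))); [intros; ring | apply good_scal; auto].
Qed.

Lemma GA_poly2 n phi0 phi1 (c : nat -> nat -> R) e1 e2 : Arc phi0 phi1 -> (e1 + e2 = 1)%nat ->
  GA n phi0 phi1 (fun u x => poly2 c n (r u * cos x) (r u * sin x) *
                              (r u * (cos x ^ e1 * sin x ^ e2))).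
Proof.
  intros Harc He.
  apply GA_ext with (fun u x => sum_f_R0 (fun i => sum_f_R0 (fun j =>
     c i j * (r u ^ (i + j + 1) * (cos x ^ (i + e1) * sin x ^ (j + e2)))) (n - i)) n).
  - intros u x. unfold poly2. rewrite Rmult_comm, scal_sum. apply sum_eq; intros i Hi.
    rewrite Rmult_comm, scal_sum. apply sum_eq; intros j Hj.
    rewrite !pow_add, !Rpow_mult_distr. simpl. ring.
  - apply GA_sum; intros i Hi. apply GA_sum; intros j Hj.
    apply GA_base with (p := (i + e1)%nat) (q := (j + e2)%nat); auto; lia.
Qed.

Lemma sq_pos u : 0 < sqrt (1 + u ^ 2).
Proof. apply sqrt_lt_R0. pose proof (pow2_ge_0 u); lra. Qed.

Lemma sq_sq u : sqrt (1 + u ^ 2) * sqrt (1 + u ^ 2) = 1 + u ^ 2.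
Proof. apply sqrt_sqrt. pose proof (pow2_ge_0 u); lra. Qed.

Lemma uh_eq u : 0 < u -> uh (u ^ 4 + u ^ 2) = u.
Proof.
  intros Hu. unfold uh.
  replace (1 + 4 * (u ^ 4 + u ^ 2)) with ((2 * u ^ 2 + 1) ^ 2) by ring.
  rewrite sqrt_pow2 by (pose proof (pow2_ge_0 u); lra).
  replace ((2 * u ^ 2 + 1 - 1) / 2) with (u ^ 2) by field.
  apply sqrt_pow2; lra.
Qed.

Lemma r_eq u : 0 < u -> r u = u * sqrt (1 + u ^ 2).
Proof.
  intros Hu. unfold r. replace (u ^ 4 + u ^ 2) with (u ^ 2 * (1 + u ^ 2)) by ring.
  rewrite sqrt_mult by (pose proof (pow2_ge_0 u); lra). rewrite sqrt_pow2; lra.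
Qed.

Definition al (u : R) : R := atan (uh (u ^ 4 + u ^ 2)).

Lemma EP_al : EP al.
Proof.
  exists 1, 1. intros u Hu. unfold al. rewrite uh_eq, r_eq, cos_atan, sin_atan by auto.
  replace (1 + u²) with (1 + u ^ 2) by (unfold Rsqr; ring).
  pose proof (sq_pos u). split; field; lra.
Qed.

Lemma EP_ext f g : (forall u, f u = g u) -> EP f -> EP g.
Proof. intros E [s [t H]]; exists s, t; intros u Hu; rewrite <- E; auto. Qed.

Lemma EP_neg f : EP f -> EP (fun u => - f u).
Proof.
  intros [s [t H]]; exists s, (- t); intros u Hu; rewrite cos_neg, sin_neg.
  destruct (H u Hu) as [H1 H2]; split; [auto| ]. rewrite <- Ropp_mult_distr_r, H2; ring.
Qed.

Lemma EP_mPI f : EP f -> EP (fun u => f u - PI).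
Proof.
  intros [s [t H]]; exists (- s), (- t); intros u Hu.
  rewrite cos_minus, sin_minus, cos_PI, sin_PI.
  destruct (H u Hu) as [H1 H2]; split.
  - replace (r u * (cos (f u) * -1 + sin (f u) * 0)) with (- (r u * cos (f u))) by ring. rewrite H1; ring.
  - replace (r u * (sin (f u) * -1 - cos (f u) * 0)) with (- (r u * sin (f u))) by ring. rewrite H2; ring.
Qed.

Lemma EP_PIm f : EP f -> EP (fun u => PI - f u).
Proof.
  intros [s [t H]]; exists (- s), t; intros u Hu.
  rewrite cos_minus, sin_minus, cos_PI, sin_PI.
  destruct (H u Hu) as [H1 H2]; split.
  - replace (r u * (-1 * cos (f u) + 0 * sin (f u))) with (- (r u * cos (f u))) by ring. rewrite H1; ring.
  - replace (r u * (0 * cos (f u) - -1 * sin (f u))) with (r u * sin (f u)) by ring. rewrite H2; ring.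
Qed.

Lemma hJ u : 0 < u -> (u ^ 4 + u ^ 2) * J u = (u ^ 4 + u ^ 2) * (PI / 2 - atan u) / 2 + u ^ 3 / 2.
Proof.
  intros Hu. unfold J. pose proof (pow2_ge_0 u). field. lra.
Qed.

Lemma HPoly1 c : HPoly 1 (fun t => c * t).
Proof. simpl. exists (fun _ => c); split; [apply IsPoly_const | intros; ring]. Qed.

Lemma G_a : good 3 1 (fun u => (u ^ 4 + u ^ 2) * (- al u - al u)).
Proof.
  exists (fun t => (- PI) * t ^ 3 + ((- PI) * t ^ 1 + (-2) * t ^ 2)), (fun t => 4 * t).
  split; [|split].
  - apply IsPoly_add; [apply IsPoly_mono; lia|]. apply IsPoly_add; apply IsPoly_mono; lia.
  - apply HPoly1.
  - intros u Hu. unfold al. rewrite uh_eq by auto.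
    rewrite Rmult_assoc, hJ by auto. field.
Qed.

Lemma G_b : good 3 1 (fun u => (u ^ 4 + u ^ 2) * (2 * al u - PI)).
Proof.
  exists (fun t => 2 * t ^ 2), (fun t => (-4) * t).
  split; [|split].
  - apply IsPoly_mono; lia.
  - apply HPoly1.
  - intros u Hu. unfold al. rewrite uh_eq by auto.
    rewrite Rmult_assoc, hJ by auto. field.
Qed.

Lemma Arc1 : Arc al (fun u => - al u).
Proof.
  split; [apply EP_al|split; [apply EP_neg, EP_al|]].
  apply good_ext with (2 := G_a). intros; reflexivity.
Qed.

Lemma Arc2 : Arc (fun u => - al u) (fun u => al u - PI).
Proof.
  split; [apply EP_neg, EP_al|split; [apply EP_mPI, EP_al|]].
  apply good_ext with (2 := G_b). intros; ring.
Qed.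

Lemma Arc3 : Arc (fun u => al u - PI) (fun u => - PI - al u).
Proof.
  split; [apply EP_mPI, EP_al|split].
  - apply EP_ext with (fun u => (- al u) - PI); [intros; ring|]. apply EP_mPI, EP_neg, EP_al.
  - apply good_ext with (2 := G_a). intros; ring.
Qed.

Lemma Arc4 : Arc (fun u => PI - al u) al.
Proof.
  split; [apply EP_PIm, EP_al|split; [apply EP_al|]].
  apply good_ext with (2 := G_b). intros; ring.
Qed.

Lemma asin_der x : -1 < x < 1 -> is_derive asin x (1 / sqrt (1 - x²)).
Proof.
  intros H. apply is_derive_Reals.
  generalize (derive_pt_asin x H). unfold derive_pt.
  destruct (derivable_pt_asin x H) as [l Hl]. simpl. intros <-. exact Hl.
Qed.

Lemma IJ u : 0 < u -> Defs.RInt (fun t => sqrt (1 - t ^ 2)) 0 (1 / sqrt (1 + u ^ 2)) = J u.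
Proof.
  intros Hu. pose proof (sq_pos u) as Hs. pose proof (sq_sq u) as Hss.
  set (s := sqrt (1 + u ^ 2)) in *.
  assert (Hs1 : 1 < s) by (assert (0 < u ^ 2) by (apply pow_lt; auto); nra).
  assert (Hc : 0 < 1 / s < 1).
  { split; [apply Rdiv_lt_0_compat; lra|]. apply (Rmult_lt_reg_r s); [lra|]. field_simplify; lra. }
  rewrite (RInt_ftc _ (fun t => 1 / 2 * (asin t + t * sqrt (1 - t ^ 2)))).
  - rewrite asin_0. 
    assert (E : 1 - (1 / s) ^ 2 = (u / s) ^ 2).
    { replace (1 - (1 / s) ^ 2) with ((s * s - 1) / (s * s)) by (field; lra).
      replace ((u / s) ^ 2) with (u ^ 2 / (s * s)) by (field; lra).
      rewrite Hss. field. pose proof (pow2_ge_0 u); lra. }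
    rewrite E.
    rewrite sqrt_pow2 by (apply Rlt_le, Rdiv_lt_0_compat; lra).
    replace (1 / s) with (cos (atan u)) at 1 by (rewrite cos_atan; unfold s; f_equal; f_equal; unfold Rsqr; ring).
    rewrite <- sin_shift, asin_sin.
    + unfold J. simpl. replace (1 / s * (u / s)) with (u / (s * s)) by (field; lra).
      rewrite Hss. field. pose proof (pow2_ge_0 u). simpl in *; lra.
    + pose proof (atan_bound u). pose proof (atan_increasing 0 u Hu). rewrite atan_0 in *. lra.
  - intros x Hx. rewrite Rmin_left, Rmax_right in Hx by (destruct Hc; lra).
    assert (Hx2 : 0 < 1 - x ^ 2) by nra.
    eapply der_eq.
    + apply (is_derive_scal (fun t => asin t + t * sqrt (1 - t ^ 2))).
      apply (is_derive_plus asin (fun t => t * sqrt (1 - t ^ 2))).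
      * apply asin_der; lra.
      * auto_derive; [lra | reflexivity].
    + pose proof (sqrt_lt_R0 _ Hx2) as HS. pose proof (sqrt_sqrt (1 - x ^ 2) (Rlt_le _ _ Hx2)) as HSS.
      replace (1 + - (x * (x * 1))) with (1 - x ^ 2) by ring.
      replace (1 - x²) with (1 - x ^ 2) by (unfold Rsqr; ring).
      unfold plus; simpl.
      replace (1 - x * (x * 1)) with (1 - x ^ 2) by ring.
      set (S := sqrt (1 - x ^ 2)) in *.
      transitivity ((1 - x ^ 2 + S * S) / (2 * S)); [field; lra|].
      rewrite <- HSS. field. lra.
  - intros x Hx. rewrite Rmin_left, Rmax_right in Hx by (destruct Hc; lra).
    assert (Hx2 : 0 < 1 - x ^ 2) by nra.
    apply (@ex_derive_continuous R_AbsRing R_NormedModule). auto_derive. lra.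
Qed.

Lemma circ_lemma n (ca cb : nat -> nat -> R) phi0 phi1 : Arc phi0 phi1 ->
  exists A : R -> R -> R, good (2 * n + 1) ((n + 1) / 2) (fun u => A u (phi1 u) - A u (phi0 u)) /\
    forall u t0 t1, circ_int (poly2 ca n) (poly2 cb n) (u ^ 4 + u ^ 2) t0 t1 = A u t1 - A u t0.
Proof.
  intros Harc.
  assert (HG : GA n phi0 phi1 (fun u x =>
     poly2 cb n (sqrt (u ^ 4 + u ^ 2) * cos x) (sqrt (u ^ 4 + u ^ 2) * sin x) * (- sqrt (u ^ 4 + u ^ 2) * sin x)
   - poly2 ca n (sqrt (u ^ 4 + u ^ 2) * cos x) (sqrt (u ^ 4 + u ^ 2) * sin x) * (sqrt (u ^ 4 + u ^ 2) * cos x))).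
  { apply GA_ext with (fun u x =>
      (-1) * (poly2 cb n (r u * cos x) (r u * sin x) * (r u * (cos x ^ 0 * sin x ^ 1)))
      + (-1) * (poly2 ca n (r u * cos x) (r u * sin x) * (r u * (cos x ^ 1 * sin x ^ 0)))).
    - intros u x. unfold r. simpl. ring.
    - apply GA_add; apply GA_scal; apply GA_poly2; auto. }
  destruct HG as [A [HD [HC G]]].
  exists A; split; auto.
  intros u t0 t1. unfold circ_int. apply RInt_ftc; intros; [apply HD | apply HC].
Qed.

Theorem mainTheorem9 (n : nat) (Hn : (1 <= n)%nat) (a b : nat -> nat -> nat -> R) :
  exists (p q : nat -> R),
    forall u : R, 0 < u ->
      Mfun n a b (u ^ 4 + u ^ 2)
      = u * poly1 p (2 * n + 1) u
        + (u ^ 4 + u ^ 2) * poly1 q ((n - 1) / 2) (u ^ 4 + u ^ 2)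
          * Defs.RInt (fun t => sqrt (1 - t ^ 2)) 0 (1 / sqrt (1 + u ^ 2)).
Proof.
  destruct (circ_lemma n (a 1%nat) (b 1%nat) _ _ Arc1) as [A1 [G1 E1]].
  destruct (circ_lemma n (a 2%nat) (b 2%nat) _ _ Arc2) as [A2 [G2 E2]].
  destruct (circ_lemma n (a 3%nat) (b 3%nat) _ _ Arc3) as [A3 [G3 E3]].
  destruct (circ_lemma n (a 4%nat) (b 4%nat) _ _ Arc4) as [A4 [G4 E4]].
  pose proof (good_add _ _ _ _ (good_add _ _ _ _ (good_add _ _ _ _ G1 G2) G3) G4) as G.
  destruct G as [P [Gf [[p Hp] [HG H]]]].
  replace ((n + 1) / 2)%nat with (S ((n - 1) / 2)) in HG.
  2: { replace (n + 1)%nat with ((n - 1) + 1 * 2)%nat by lia. rewrite Nat.div_add by lia. lia. }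
  destruct HG as [Q [[q Hq] HGQ]].
  exists p, q. intros u Hu.
  unfold Mfun. cbv beta zeta.
  rewrite E1, E2, E3, E4.
  transitivity (u * P u + Gf (u ^ 4 + u ^ 2) * J u).
  { rewrite <- (H u Hu). unfold al. reflexivity. }
  rewrite Hp, HGQ, Hq, <- (IJ u Hu). ring.
Qed.
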